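(* Let $\lambda>0$, $b\ge 0$, and let $(s_n)_{n\ge 1}$, $(a_n)_{n\ge 1}$ be real sequences with $s_n\in[0,1)$ for all $n$, $s\doteq\sup_{n}s_n<1$ and $A\doteq\sup_{n}a_n<\infty$. Consider the difference equation $$x_{n+1}=s_nx_n+x_{n-1}^{\lambda}e^{a_n-bx_n-x_{n-1}},\qquad n\ge 1,$$ with non-negative initial values $x_0,x_1$. (a) Every non-negative solution is eventually uniformly bounded: there is a constant $M$ depending only on $\lambda,A,s$ (e.g. $M=1+\lambda^{\lambda}e^{A-\lambda}/(1-s)$) such that for every non-negative solution $\{x_n\}$ one has $x_n\le M$ for all sufficiently large $n$. (b) Let $\lambda>1$ and $\rho=\exp\!\left(-\dfrac{A-\ln(1-s)}{\lambda-1}\right)$. If $\{x_n\}$ is a solution with $0\le x_0,x_1<\rho$, then $\lim_{n\to\infty}x_n=0$. (c) Let $\lambda>1$. If $A<\ln(1-s)+(\lambda-1)[1-\ln(\lambda-1)]$, then every non-negative solution converges to $0$.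
   Context: Solutions are real sequences $\{x_n\}_{n\ge0}$ generated by the recursion from the initial values $x_0,x_1$. *)

(* Defs.v *)
From Stdlib Require Import Reals.
Open Scope R_scope.

(* Real power x^y for x >= 0, with the convention 0^y = 0 (y > 0). *)
Definition rpow (x y : R) : R := if Rle_dec x 0 then 0 else Rpower x y.

Definition is_solution (sn an : nat -> R) (lam b : R) (x : nat -> R) : Prop :=
  forall n : nat, (1 <= n)%nat ->
    x (S n) = sn n * x n + rpow (x (n - 1)%nat) lam
                             * exp (an n - b * x n - x (n - 1)%nat).

Definition coeff_hyp (sn an : nat -> R) (s A : R) : Prop :=
  (forall n : nat, (1 <= n)%nat -> 0 <= sn n < 1) /\
  is_lub (fun y => exists n : nat, (1 <= n)%nat /\ y = sn n) s /\
  is_lub (fun y => exists n : nat, (1 <= n)%nat /\ y = an n) A.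

(* Main.v *)
Require Import Defs.
From Stdlib Require Import Reals Lra Lia.
Open Scope R_scope.

Lemma exp_le' a b : a <= b -> exp a <= exp b.
Proof. intros [H|H]. left; now apply exp_increasing. subst; lra. Qed.

Lemma rpow_nonneg y p : 0 <= rpow y p.
Proof. unfold rpow; destruct (Rle_dec y 0). lra. unfold Rpower; left; apply exp_pos. Qed.

Lemma log_ineq mu y : 0 < mu -> 0 < y -> mu * ln y - y <= mu * ln mu - mu.
Proof.
  intros Hm Hy.
  pose proof (exp_ineq1_le (ln y - ln mu)) as H.
  unfold Rminus in H. rewrite exp_plus, exp_Ropp, !exp_ln in H by lra.
  assert (H2: mu * (1 + (ln y + - ln mu)) <= mu * (y * / mu)).
  { apply Rmult_le_compat_l; lra. }
  replace (mu * (y * / mu)) with y in H2 by (field; lra). nra.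
Qed.

Lemma rpow_exp_bound mu y : 0 < mu -> 0 <= y ->
  rpow y mu * exp (- y) <= exp (mu * ln mu - mu).
Proof.
  intros Hm Hy. unfold rpow; destruct (Rle_dec y 0).
  - rewrite Rmult_0_l; left; apply exp_pos.
  - unfold Rpower. rewrite <- exp_plus. apply exp_le'.
    pose proof (log_ineq mu y Hm ltac:(lra)). lra.
Qed.

Lemma rpow_split y lam : 0 <= y -> rpow y lam = y * rpow y (lam - 1).
Proof.
  intros Hy. unfold rpow; destruct (Rle_dec y 0). lra.
  replace lam with (1 + (lam - 1)) at 1 by ring.
  rewrite Rpower_plus, Rpower_1; lra.
Qed.

Lemma rpow_mono y m p : 0 <= p -> 0 <= y <= m -> rpow y p <= rpow m p.
Proof.
  intros Hp Hy. unfold rpow; destruct (Rle_dec y 0); destruct (Rle_dec m 0); try lra.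
  - unfold Rpower; left; apply exp_pos.
  - apply Rle_Rpower_l; lra.
Qed.

Lemma coeff_facts sn an s A : coeff_hyp sn an s A ->
  0 <= s /\ (forall n, (1 <= n)%nat -> 0 <= sn n <= s /\ an n <= A).
Proof.
  intros [H1 [[Hs1 Hs2] [HA1 HA2]]]. split.
  - specialize (H1 1%nat (le_n 1)). assert (sn 1%nat <= s) by (apply Hs1; exists 1%nat; auto). lra.
  - intros n Hn. specialize (H1 n Hn). repeat split; try lra.
    apply Hs1; exists n; auto. apply HA1; exists n; auto.
Qed.

Lemma sol_nonneg sn an s A lam b x : coeff_hyp sn an s A -> is_solution sn an lam b x ->
  0 <= x 0%nat -> 0 <= x 1%nat -> forall n, 0 <= x n.
Proof.
  intros Hc Hx H0 H1.
  destruct (coeff_facts _ _ _ _ Hc) as [_ Hf].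
  assert (forall n, 0 <= x n /\ 0 <= x (S n)).
  { induction n as [|n [IH1 IH2]]. auto. split; auto.
    rewrite Hx by lia. replace (S n - 1)%nat with n by lia.
    destruct (Hf (S n) ltac:(lia)) as [[Ha Hb] _].
    apply Rplus_le_le_0_compat. apply Rmult_le_pos; auto.
    apply Rmult_le_pos. apply rpow_nonneg. left; apply exp_pos. }
  intros n; apply H.
Qed.

Lemma step_bound sn an s A lam b x : 0 <= b -> coeff_hyp sn an s A -> is_solution sn an lam b x ->
  0 <= x 0%nat -> 0 <= x 1%nat -> forall n, (1 <= n)%nat ->
  x (S n) <= s * x n + exp A * (rpow (x (n-1)%nat) lam * exp (- x (n-1)%nat)).
Proof.
  intros Hb Hc Hx H0 H1 n Hn.
  pose proof (sol_nonneg _ _ _ _ _ _ _ Hc Hx H0 H1) as Hnn.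
  destruct (coeff_facts _ _ _ _ Hc) as [_ Hf].
  destruct (Hf n Hn) as [[Ha1 Ha2] Ha3].
  rewrite Hx by auto. apply Rplus_le_compat.
  - apply Rmult_le_compat_r; auto.
  - rewrite (Rmult_comm (exp A)), Rmult_assoc. apply Rmult_le_compat_l. apply rpow_nonneg.
    rewrite <- exp_plus. apply exp_le'.
    pose proof (Hnn n). assert (0 <= b * x n) by (apply Rmult_le_pos; auto). lra.
Qed.

Lemma contraction (x : nat -> R) r : 0 <= r < 1 -> (forall n, 0 <= x n) ->
  (forall n, (1 <= n)%nat -> x (S n) <= r * Rmax (x n) (x (n-1)%nat)) -> Un_cv x 0.
Proof.
  intros Hr Hnn Hs.
  set (M0 := Rmax (x 0%nat) (x 1%nat)).
  assert (HM0 : 0 <= M0) by (unfold M0; apply Rmax_case; auto).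
  assert (K : forall k, x (2*k)%nat <= r ^ k * M0 /\ x (2*k+1)%nat <= r ^ k * M0).
  { induction k as [|k [IH1 IH2]].
    - simpl. unfold M0. split; rewrite Rmult_1_l; [apply Rmax_l | apply Rmax_r].
    - assert (Hrk : 0 <= r ^ k) by (apply pow_le; lra).
      assert (E1 : x (2 * S k)%nat <= r ^ S k * M0).
      { replace (2 * S k)%nat with (S (2*k+1)) by lia.
        eapply Rle_trans. apply Hs; lia.
        replace (2*k+1-1)%nat with (2*k)%nat by lia. simpl.
        rewrite Rmult_assoc. apply Rmult_le_compat_l. lra.
        apply Rmax_lub; auto. }
      split; auto.
      replace (2 * S k + 1)%nat with (S (2 * S k)) by lia.
      eapply Rle_trans. apply Hs; lia.
      replace (2 * S k - 1)%nat with (2*k+1)%nat by lia. simpl.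
      rewrite Rmult_assoc. apply Rmult_le_compat_l. lra.
      apply Rmax_lub. simpl in E1. eapply Rle_trans. apply E1.
      rewrite Rmult_assoc. rewrite <- (Rmult_1_l (r^k * M0)) at 2.
      apply Rmult_le_compat_r. apply Rmult_le_pos; auto. lra.
      auto. }
  intros eps Heps.
  destruct (pow_lt_1_zero r ltac:(rewrite Rabs_pos_eq; lra) (eps / (M0 + 1)) ltac:(apply Rdiv_lt_0_compat; lra)) as [N HN].
  exists (2*N)%nat. intros n Hn. unfold Rdist. rewrite Rminus_0_r, Rabs_pos_eq by auto.
  assert (exists k, (k >= N)%nat /\ x n <= r ^ k * M0) as [k [Hk Hxk]].
  { destruct (Nat.Even_or_Odd n) as [[k Hk]|[k Hk]]; exists k; subst n; split; try lia;
    apply K. }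
  specialize (HN k Hk). rewrite Rabs_pos_eq in HN by (apply pow_le; lra).
  apply Rle_lt_trans with (1 := Hxk).
  apply Rle_lt_trans with (r ^ k * (M0 + 1)).
  apply Rmult_le_compat_l. apply pow_le; lra. lra.
  apply Rmult_lt_reg_r with (/ (M0+1)). apply Rinv_0_lt_compat; lra.
  rewrite Rmult_assoc, Rinv_r by lra. lra.
Qed.

Lemma lin_to_contr sn an s A lam b x c : 0 <= b -> coeff_hyp sn an s A -> is_solution sn an lam b x ->
  0 <= x 0%nat -> 0 <= x 1%nat -> 0 <= c -> s + c < 1 ->
  (forall n, (1 <= n)%nat -> exp A * (rpow (x (n-1)%nat) lam * exp (- x (n-1)%nat)) <= c * x (n-1)%nat) ->
  Un_cv x 0.
Proof.
  intros Hb Hc Hx H0 H1 Hc0 Hsc Hk.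
  pose proof (sol_nonneg _ _ _ _ _ _ _ Hc Hx H0 H1) as Hnn.
  destruct (coeff_facts _ _ _ _ Hc) as [Hs0 _].
  apply (contraction x (s + c)). lra. auto.
  intros n Hn. eapply Rle_trans. apply (step_bound sn an s A lam b x); auto.
  specialize (Hk n Hn).
  assert (x n <= Rmax (x n) (x (n-1)%nat)) by apply Rmax_l.
  assert (x (n-1)%nat <= Rmax (x n) (x (n-1)%nat)) by apply Rmax_r.
  nra.
Qed.

Lemma partA lam s A (hlam : 0 < lam) (hs : s < 1) :
  exists M : R, forall (b : R) (sn an : nat -> R) (x : nat -> R),
      0 <= b -> coeff_hyp sn an s A -> is_solution sn an lam b x ->
      0 <= x 0%nat -> 0 <= x 1%nat ->
      exists N : nat, forall n : nat, (N <= n)%nat -> x n <= M.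
Proof.
  set (K := exp A * exp (lam * ln lam - lam)).
  assert (HK : 0 <= K) by (unfold K; left; apply Rmult_lt_0_compat; apply exp_pos).
  exists (1 + K / (1 - s)).
  intros b sn an x Hb Hc Hx H0 H1.
  pose proof (sol_nonneg _ _ _ _ _ _ _ Hc Hx H0 H1) as Hnn.
  destruct (coeff_facts _ _ _ _ Hc) as [Hs0 _].
  assert (Step : forall n, (1 <= n)%nat -> x (S n) <= s * x n + K).
  { intros n Hn. eapply Rle_trans. apply (step_bound sn an s A lam b x); auto.
    apply Rplus_le_compat_l. unfold K. apply Rmult_le_compat_l. left; apply exp_pos.
    apply rpow_exp_bound; auto. }
  assert (Ind : forall m, x (S m) <= K / (1 - s) + s ^ m * x 1%nat).
  { induction m. simpl. rewrite Rmult_1_l. assert (0 <= K / (1-s)) by (unfold Rdiv; apply Rmult_le_pos; [lra | left; apply Rinv_0_lt_compat; lra]). lra.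
    eapply Rle_trans. apply Step; lia.
    assert (E : K / (1 - s) = s * (K / (1-s)) + K) by (field; lra).
    rewrite E. simpl. pose proof (Hnn (S m)). nra. }
  destruct (pow_lt_1_zero s ltac:(rewrite Rabs_pos_eq; lra) (1 / (x 1%nat + 1)) ltac:(apply Rdiv_lt_0_compat; lra)) as [N HN].
  exists (S N). intros n Hn. destruct n as [|m]. lia.
  eapply Rle_trans. apply Ind.
  specialize (HN m ltac:(lia)). rewrite Rabs_pos_eq in HN by (apply pow_le; lra).
  assert (s ^ m * x 1%nat <= 1).
  { apply Rle_trans with (s ^ m * (x 1%nat + 1)). apply Rmult_le_compat_l. apply pow_le; lra. lra.
    apply Rmult_le_reg_r with (/ (x 1%nat + 1)). apply Rinv_0_lt_compat; lra.
    rewrite Rmult_assoc, Rinv_r by lra. lra. }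
  lra.
Qed.

Lemma partB lam s A (hlam : 0 < lam) (hs : s < 1) :
  (1 < lam ->
    forall (b : R) (sn an : nat -> R) (x : nat -> R),
      0 <= b -> coeff_hyp sn an s A -> is_solution sn an lam b x ->
      let rho := exp (- ((A - ln (1 - s)) / (lam - 1))) in
      0 <= x 0%nat < rho -> 0 <= x 1%nat < rho ->
      Un_cv x 0).
Proof.
  intros Hl b sn an x Hb Hc Hx rho H0 H1.
  pose proof (sol_nonneg _ _ _ _ _ _ _ Hc Hx ltac:(lra) ltac:(lra)) as Hnn.
  destruct (coeff_facts _ _ _ _ Hc) as [Hs0 _].
  set (m := Rmax (x 0%nat) (x 1%nat)).
  assert (Hm : 0 <= m < rho) by (unfold m; apply Rmax_case; lra).
  set (c := exp A * rpow m (lam - 1)).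
  assert (Hc0 : 0 <= c) by (unfold c; apply Rmult_le_pos; [left; apply exp_pos | apply rpow_nonneg]).
  assert (Hclt : c < 1 - s).
  { unfold c, rpow. destruct (Rle_dec m 0). rewrite Rmult_0_r; lra.
    unfold Rpower. rewrite <- exp_plus. rewrite <- (exp_ln (1 - s)) by lra. apply exp_increasing.
    assert (ln m < ln rho) by (apply ln_increasing; lra).
    unfold rho in H. rewrite ln_exp in H.
    assert ((lam - 1) * ln m < (lam - 1) * (- ((A - ln (1 - s)) / (lam - 1)))) by (apply Rmult_lt_compat_l; lra).
    replace ((lam - 1) * (- ((A - ln (1 - s)) / (lam - 1)))) with (- (A - ln (1-s))) in H2 by (field; lra).
    lra. }
  assert (Key : forall y, 0 <= y <= m -> exp A * (rpow y lam * exp (- y)) <= c * y).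
  { intros y Hy. rewrite rpow_split by lra.
    assert (rpow y (lam - 1) <= rpow m (lam - 1)) by (apply rpow_mono; lra).
    assert (exp (- y) <= 1) by (rewrite <- exp_0; apply exp_le'; lra).
    pose proof (rpow_nonneg y (lam-1)). pose proof (exp_pos (-y)). pose proof (exp_pos A).
    unfold c. assert (0 <= y * rpow y (lam - 1)) by (apply Rmult_le_pos; lra).
    assert (y * rpow y (lam - 1) * exp (- y) <= y * rpow m (lam - 1)).
    { apply Rle_trans with (y * rpow y (lam - 1) * 1). apply Rmult_le_compat_l; lra.
      rewrite Rmult_1_r. apply Rmult_le_compat_l; lra. }
    nra. }
  assert (Bd : forall n, x n <= m /\ x (S n) <= m).
  { induction n as [|n [IH1 IH2]]. unfold m; split; [apply Rmax_l|apply Rmax_r].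
    split; auto. eapply Rle_trans. apply (step_bound sn an s A lam b x); auto; try lra.
    all: try lia. replace (S n - 1)%nat with n by lia.
    pose proof (Key (x n) ltac:(split; auto)). assert (s * x (S n) <= s * m) by (apply Rmult_le_compat_l; lra). assert (c * x n <= c * m) by (apply Rmult_le_compat_l; lra). nra. }
  apply (lin_to_contr sn an s A lam b x c); auto; try lra.
  intros n Hn. apply Key. split; auto. apply Bd.
Qed.

Lemma partC lam s A (hlam : 0 < lam) (hs : s < 1) :
  (1 < lam -> A < ln (1 - s) + (lam - 1) * (1 - ln (lam - 1)) ->
    forall (b : R) (sn an : nat -> R) (x : nat -> R),
      0 <= b -> coeff_hyp sn an s A -> is_solution sn an lam b x ->
      0 <= x 0%nat -> 0 <= x 1%nat ->
      Un_cv x 0).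
Proof.
  intros Hl HA b sn an x Hb Hc Hx H0 H1.
  pose proof (sol_nonneg _ _ _ _ _ _ _ Hc Hx H0 H1) as Hnn.
  set (c := exp A * exp ((lam - 1) * ln (lam - 1) - (lam - 1))).
  assert (Hc0 : 0 <= c) by (unfold c; left; apply Rmult_lt_0_compat; apply exp_pos).
  assert (Hclt : c < 1 - s).
  { unfold c. rewrite <- exp_plus. rewrite <- (exp_ln (1 - s)) by lra. apply exp_increasing. nra. }
  apply (lin_to_contr sn an s A lam b x c); auto; try lra.
  intros n Hn. set (y := x (n-1)%nat). assert (Hy : 0 <= y) by apply Hnn.
  rewrite rpow_split by lra.
  pose proof (rpow_exp_bound (lam - 1) y ltac:(lra) Hy).
  pose proof (exp_pos A).
  unfold c.
  replace (exp A * (y * rpow y (lam - 1) * exp (- y))) with (exp A * y * (rpow y (lam-1) * exp(-y))) by ring.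
  replace (exp A * exp ((lam - 1) * ln (lam - 1) - (lam - 1)) * y) with (exp A * y * exp ((lam - 1) * ln (lam - 1) - (lam - 1))) by ring.
  apply Rmult_le_compat_l; [apply Rmult_le_pos; lra | auto].
Qed.

Theorem mainTheorem1 (lam s A : R) (hlam : 0 < lam) (hs : s < 1) :
  (* (a) M depends only on lam, A, s *)
  (exists M : R, forall (b : R) (sn an : nat -> R) (x : nat -> R),
      0 <= b -> coeff_hyp sn an s A -> is_solution sn an lam b x ->
      0 <= x 0%nat -> 0 <= x 1%nat ->
      exists N : nat, forall n : nat, (N <= n)%nat -> x n <= M) /\
  (* (b) *)
  (1 < lam ->
    forall (b : R) (sn an : nat -> R) (x : nat -> R),
      0 <= b -> coeff_hyp sn an s A -> is_solution sn an lam b x ->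
      let rho := exp (- ((A - ln (1 - s)) / (lam - 1))) in
      0 <= x 0%nat < rho -> 0 <= x 1%nat < rho ->
      Un_cv x 0) /\
  (* (c) *)
  (1 < lam -> A < ln (1 - s) + (lam - 1) * (1 - ln (lam - 1)) ->
    forall (b : R) (sn an : nat -> R) (x : nat -> R),
      0 <= b -> coeff_hyp sn an s A -> is_solution sn an lam b x ->
      0 <= x 0%nat -> 0 <= x 1%nat ->
      Un_cv x 0).
Proof.
  split; [apply partA | split; [apply partB | apply partC]]; auto.
Qed.
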